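(* Let $m,n,w,d$ be positive integers with $w\le m$. For any positive integer $a$, $$A(am,n,w,d)\ge C\left(a,n,\left\lceil\frac{d}{w}\right\rceil\right)A(m,n,w,d).$$ Furthermore, if $a$ divides $w$ and $d\le nw\frac{a-1}{a}$, then $$A(am,n,w,d)\ge C\left(a,n,\left\lceil\frac{d}{w}\right\rceil\right)A(m,n,w,d)+A\left(m,an,\frac{w}{a},d\right).$$
   Context: $J(m,w)$ denotes the set of binary vectors of length $m$ and Hamming weight $w$. Elements of $J(m,w)^n$ are identified with $m\times n$ binary matrices all of whose columns have weight $w$, with binary Hamming distance. $A(m,n,w,d)$ is the maximum cardinality of a nonempty subset of $J(m,w)^n$ with pairwise Hamming distances at least $2d$. $C(q,n,d)$ is the maximum cardinality of a nonempty subset of $[q]^n$, $[q]=\{0,\dots,q-1\}$, with pairwise Hamming distances (number of differing coordinates) at least $d$. *)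

(* Defs.v *)
From mathcomp Require Import all_boot all_order all_algebra.
Set Implicit Arguments. Unset Strict Implicit. Unset Printing Implicit Defensive.

(* Elements of J(m,w)^n : m x n binary matrices all of whose columns have weight w. *)
Definition col_weights (m n w : nat) (M : 'M[bool]_(m, n)) : bool :=
  [forall j : 'I_n, #|[set i : 'I_m | M i j]| == w].

Definition bdist (m n : nat) (M N : 'M[bool]_(m, n)) : nat :=
  #|[set ij : 'I_m * 'I_n | M ij.1 ij.2 != N ij.1 ij.2]|.

Definition is_constw_code (m n w d : nat) (S : {set 'M[bool]_(m, n)}) : bool :=
  [&& S != set0,
      [forall M in S, col_weights w M] &
      [forall M in S, forall N in S, (M != N) ==> (2 * d <= bdist M N)]].

Definition A (m n w d : nat) : nat :=
  \max_(S : {set 'M[bool]_(m, n)} | is_constw_code w d S) #|S|.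

Definition qdist (q n : nat) (x y : {ffun 'I_n -> 'I_q}) : nat :=
  #|[set i : 'I_n | x i != y i]|.

Definition is_q_code (q n d : nat) (S : {set {ffun 'I_n -> 'I_q}}) : bool :=
  (S != set0) && [forall x in S, forall y in S, (x != y) ==> (d <= qdist x y)].

Definition C (q n d : nat) : nat :=
  \max_(S : {set {ffun 'I_n -> 'I_q}} | is_q_code d S) #|S|.

Definition ceil_div (d w : nat) : nat := (d + w.-1) %/ w.

(* Main.v *)
Require Import Defs.
From mathcomp Require Import all_boot all_order all_algebra.
From mathcomp Require Import zify.
Set Implicit Arguments. Unset Strict Implicit. Unset Printing Implicit Defensive.

Lemma card_setE (T : finType) (p : pred T) : #|[set x | p x]| = \sum_x (p x : nat).
Proof.
rewrite -sum1_card big_mkcond /=; apply: eq_bigr => x _; rewrite inE; by case: (p x).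
Qed.

Lemma bdistE m n (M N : 'M[bool]_(m,n)) :
  bdist M N = \sum_(j < n) \sum_(i < m) (M i j != N i j : nat).
Proof. by rewrite /bdist card_setE [RHS]exchange_big pair_big. Qed.

Lemma bdistC m n (M N : 'M[bool]_(m,n)) : bdist M N = bdist N M.
Proof. by rewrite !bdistE; apply: eq_bigr => j _; apply: eq_bigr => i _; rewrite eq_sym. Qed.

Lemma bdist0 m n (M : 'M[bool]_(m,n)) : bdist M M = 0.
Proof. by rewrite bdistE big1 // => j _; rewrite big1 // => i _; rewrite eqxx. Qed.

Lemma col_weightsP m n w (M : 'M[bool]_(m,n)) :
  col_weights w M = [forall j, \sum_i (M i j : nat) == w].
Proof. by rewrite /col_weights; apply: eq_forallb => j; rewrite card_setE. Qed.

Lemma qdistE q n (x y : {ffun 'I_n -> 'I_q}) : qdist x y = \sum_j (x j != y j : nat).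
Proof. by rewrite /qdist card_setE. Qed.

Section Idx.
Variables (a m : nat).
Lemma card_pair : #|{: 'I_a * 'I_m}| = a * m.
Proof. by rewrite card_prod !card_ord. Qed.
Definition hh (p : 'I_a * 'I_m) : 'I_(a * m) := cast_ord card_pair (enum_rank p).
Definition gg (r : 'I_(a * m)) : 'I_a * 'I_m := enum_val (cast_ord (esym card_pair) r).
Lemma hhK : cancel hh gg.
Proof. by move=> p; rewrite /hh /gg cast_ordK enum_rankK. Qed.
Lemma ggK : cancel gg hh.
Proof. by move=> r; rewrite /hh /gg enum_valK cast_ordKV. Qed.
Lemma sum_split (F : 'I_(a * m) -> nat) :
  \sum_r F r = \sum_(k < a) \sum_(i < m) F (hh (k, i)).
Proof.
rewrite (reindex hh) /=; last by exists gg => x _; [apply: hhK | apply: ggK].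
by rewrite pair_big; apply: eq_bigr => -[].
Qed.
End Idx.

Lemma sum_pick a m (c : 'I_a) (f : 'I_a -> 'I_m -> bool) :
  \sum_(k < a) \sum_(i < m) ((k == c) && f k i : nat) = \sum_(i < m) f c i.
Proof.
rewrite (bigD1 c) //= [X in _ + X]big1 ?addn0; last first.
  move=> k /negbTE kc; apply: big1 => i _; by rewrite kc.
by apply: eq_bigr => i _; rewrite eqxx.
Qed.

Lemma pairP (T : finType) (S : {set T}) (R : T -> T -> bool) :
  reflect (forall x y, x \in S -> y \in S -> x != y -> R x y)
          [forall x in S, forall y in S, (x != y) ==> R x y].
Proof.
apply: (iffP forall_inP) => H x.
  move=> y xS yS xy; move/forall_inP: (H x xS) => /(_ y yS); by rewrite xy.
move=> xS; apply/forall_inP => y yS; apply/implyP => xy; exact: H.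
Qed.

Lemma max_ge (T : finType) (P : pred {set T}) (Q : {set T} -> bool) S :
  (forall S, P S = (S != set0) && Q S) -> Q S -> #|S| <= \max_(S | P S) #|S|.
Proof.
move=> HP HQ; have [->|ne] := eqVneq S set0; first by rewrite cards0.
by apply: leq_bigmax_cond; rewrite HP ne HQ.
Qed.

Lemma max_att (T : finType) (P : pred {set T}) (Q : {set T} -> bool) :
  (forall S, P S = (S != set0) && Q S) -> Q set0 ->
  exists S, Q S /\ \max_(S | P S) #|S| = #|S|.
Proof.
move=> HP H0; case: (pickP P) => [S0 PS0|none].
  have [|S1 PS1 E] := eq_bigmax_cond (fun S => #|S|) (A := P).
    by apply/card_gt0P; exists S0.
  exists S1; split; last by [].
  by move: PS1; rewrite unfold_in HP => /andP[].
by exists set0; rewrite big_pred0 ?cards0.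
Qed.

Definition Phi a m n (x : {ffun 'I_n -> 'I_a}) (M : 'M[bool]_(m, n)) : 'M[bool]_(a * m, n) :=
  \matrix_(r, j) (((gg r).1 == x j) && M (gg r).2 j).

Definition Psi a m n (P : 'M[bool]_(m, a * n)) : 'M[bool]_(a * m, n) :=
  \matrix_(r, j) P (gg r).2 (hh ((gg r).1, j)).

Lemma PhiE a m n (x : {ffun 'I_n -> 'I_a}) (M : 'M[bool]_(m, n)) k i j :
  Phi x M (hh (k, i)) j = (k == x j) && M i j.
Proof. by rewrite /Phi mxE hhK. Qed.

Lemma PsiE a m n (P : 'M[bool]_(m, a * n)) k i j :
  Psi P (hh (k, i)) j = P i (hh (k, j)).
Proof. by rewrite /Psi mxE hhK. Qed.

Lemma colPhi a m n (x : {ffun 'I_n -> 'I_a}) (M : 'M[bool]_(m, n)) j :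
  \sum_r (Phi x M r j : nat) = \sum_i (M i j : nat).
Proof.
rewrite sum_split -(sum_pick (x j) (fun k i => M i j)).
by apply: eq_bigr => k _; apply: eq_bigr => i _; rewrite PhiE.
Qed.

Lemma colPsi a m n t (P : 'M[bool]_(m, a * n)) j :
  (forall c, \sum_i (P i c : nat) = t) ->
  \sum_r (Psi P r j : nat) = a * t.
Proof.
move=> HP; rewrite sum_split (eq_bigr (fun _ => t)) ?sum_nat_const ?card_ord // => k _.
rewrite -(HP (hh (k, j))).
by apply: eq_bigr => i _; rewrite PsiE.
Qed.

Lemma dist_same a m n (x : {ffun 'I_n -> 'I_a}) (M N : 'M[bool]_(m, n)) :
  bdist (Phi x M) (Phi x N) = bdist M N.
Proof.
rewrite !bdistE; apply: eq_bigr => j _; rewrite sum_split.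
rewrite -(sum_pick (x j) (fun k i => M i j != N i j)).
apply: eq_bigr => k _; apply: eq_bigr => i _; rewrite !PhiE; by case: (k == x j).
Qed.

Lemma dist_diff a m n w (x y : {ffun 'I_n -> 'I_a}) (M N : 'M[bool]_(m, n)) :
  col_weights w M -> col_weights w N ->
  2 * w * qdist x y <= bdist (Phi x M) (Phi y N).
Proof.
rewrite !col_weightsP => /forallP HM /forallP HN.
rewrite qdistE bdistE big_distrr /=; apply: leq_sum => j _.
case: (eqVneq (x j) (y j)) => [_|xy]; first by rewrite muln0.
rewrite muln1 sum_split.
have -> : \sum_(k < a) \sum_(i < m) (Phi x M (hh (k, i)) j != Phi y N (hh (k, i)) j : nat)
   = \sum_(k < a) \sum_(i < m) (((k == x j) && M i j : nat) + ((k == y j) && N i j)).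
  apply: eq_bigr => k _; apply: eq_bigr => i _; rewrite !PhiE.
  case: (eqVneq k (x j)) => [->|kx]; first by rewrite (negbTE xy); case: (M i j).
  by case: (k == y j); case: (N i j).
rewrite (eq_bigr (fun k => \sum_(i < m) ((k == x j) && M i j : nat) + \sum_(i < m) ((k == y j) && N i j : nat))); last by move=> k _; rewrite big_split.
rewrite big_split /= (sum_pick (x j) (fun k i => M i j)) (sum_pick (y j) (fun k i => N i j)).
by rewrite (eqP (HM j)) (eqP (HN j)) mul2n addnn.
Qed.

Lemma dist_cross a m n w t (x : {ffun 'I_n -> 'I_a}) (M : 'M[bool]_(m, n)) (P : 'M[bool]_(m, a * n)) :
  col_weights w M -> (forall c, \sum_i (P i c : nat) = t) -> a * t = w ->
  n * (2 * w) <= bdist (Phi x M) (Psi P) + n * (2 * t).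
Proof.
rewrite col_weightsP => /forallP HM HP Hw.
have E c : n * c = \sum_(j < n) c by rewrite sum_nat_const card_ord.
rewrite bdistE !E -big_split /=; apply: leq_sum => j _.
rewrite sum_split.
have H1 : \sum_(k < a) \sum_(i < m) (((k == x j) && M i j : nat) + P i (hh (k, j))) = 2 * w.
  rewrite (eq_bigr (fun k => \sum_(i < m) ((k == x j) && M i j : nat) + \sum_(i < m) (P i (hh (k, j)) : nat))); last by move=> k _; rewrite big_split.
  rewrite big_split /= (sum_pick (x j) (fun k i => M i j)) (eqP (HM j)).
  rewrite (eq_bigr (fun k => t)); last by move=> k _; rewrite HP.
  by rewrite sum_nat_const card_ord Hw addnn mul2n.
have H2 : \sum_(k < a) \sum_(i < m) (2 * ((k == x j) && P i (hh (k, j)))) = 2 * t.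
  rewrite (eq_bigr (fun k => 2 * \sum_(i < m) ((k == x j) && P i (hh (k, j)) : nat))); last by move=> k _; rewrite big_distrr.
  by rewrite -big_distrr /= (sum_pick (x j) (fun k i => P i (hh (k, j)))) HP.
rewrite -H1 -H2 -big_split /=; apply: leq_sum => k _.
rewrite -big_split /=; apply: leq_sum => i _.
rewrite PhiE PsiE.
by case: (k == x j); case: (M i j); case: (P i _).
Qed.

Lemma dist_psi a m n (P Q : 'M[bool]_(m, a * n)) :
  bdist (Psi P) (Psi Q) = bdist P Q.
Proof.
rewrite !bdistE.
rewrite (eq_bigr (fun j => \sum_(k < a) \sum_(i < m) (P i (hh (k, j)) != Q i (hh (k, j)) : nat))); last first.
  move=> j _; rewrite sum_split; apply: eq_bigr => k _; apply: eq_bigr => i _; by rewrite !PsiE.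
by rewrite exchange_big [RHS](sum_split (fun c => \sum_i (P i c != Q i c : nat))).
Qed.

Lemma code_le m n w d (U : {set 'M[bool]_(m, n)}) :
  (forall M, M \in U -> col_weights w M) ->
  (forall M N, M \in U -> N \in U -> M != N -> 2 * d <= bdist M N) ->
  #|U| <= A m n w d.
Proof.
move=> H1 H2.
apply: (max_ge (Q := fun S => [forall M in S, col_weights w M] &&
   [forall M in S, forall N in S, (M != N) ==> (2 * d <= bdist M N)])) => //.
by apply/andP; split; [apply/forall_inP; exact: H1 | apply/pairP; exact: H2].
Qed.

Lemma ceilP d w : 0 < w -> d <= w * ceil_div d w.
Proof.
move=> w0; rewrite /ceil_div.
have := divn_eq (d + w.-1) w; have := ltn_pmod (d + w.-1) w0.
set q := _ %/ _; set r := _ %% _; lia.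
Qed.

Theorem proposition8 (m n w d a : nat) :
  0 < m -> 0 < n -> 0 < w -> 0 < d -> w <= m -> 0 < a ->
  C a n (ceil_div d w) * A m n w d <= A (a * m) n w d /\
  (a %| w -> a * d <= n * w * (a - 1) ->
   C a n (ceil_div d w) * A m n w d + A m (a * n) (w %/ a) d <= A (a * m) n w d).
Proof.
move=> m0 n0 w0 d0 wm a0.
have [Q [HQ EC]] : exists Q : {set {ffun 'I_n -> 'I_a}},
   [forall x in Q, forall y in Q, (x != y) ==> (ceil_div d w <= qdist x y)]
   /\ C a n (ceil_div d w) = #|Q|.
  by apply: max_att => //; apply/pairP => x y; rewrite inE.
move/pairP: HQ => HQ.
have [S [HS EA]] : exists S : {set 'M[bool]_(m, n)},
   ([forall M in S, col_weights w M] &&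
    [forall M in S, forall N in S, (M != N) ==> (2 * d <= bdist M N)])
   /\ A m n w d = #|S|.
  apply: max_att => //; apply/andP; split; [apply/forall_inP => M | apply/pairP => M N];
  by rewrite inE.
case/andP: HS => /forall_inP SW /pairP SD.
rewrite EC EA.
set S1 := [set Phi p.1 p.2 | p in setX Q S].
have D1 : forall p q, p \in setX Q S -> q \in setX Q S -> p != q ->
    2 * d <= bdist (Phi p.1 p.2) (Phi q.1 q.2).
  move=> [x M] [y N]; rewrite !inE /= => /andP[xQ MS] /andP[yQ NS] ne.
  case: (eqVneq x y) => [exy|nxy].
    subst y; rewrite dist_same; apply: SD => //; by apply: contraNneq ne => ->.
  apply: leq_trans (dist_diff _ _ (SW M MS) (SW N NS)).
  have := HQ x y xQ yQ nxy; have := ceilP d w0.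
  move=> h1 h2; rewrite -mulnA leq_mul2l /=; apply: leq_trans h1 _.
  by rewrite leq_mul2l h2 orbT.
have cardS1 : #|S1| = #|Q| * #|S|.
  rewrite card_in_imset ?cardsX // => p q pin qin E; apply/eqP; apply: contraT => ne.
  by have := D1 p q pin qin ne; rewrite E bdist0; lia.
have W1 : forall M, M \in S1 -> col_weights w M.
  move=> _ /imsetP[[x M] /setXP[xQ MS] ->] /=; rewrite col_weightsP.
  apply/forallP => j; rewrite colPhi.
  by move: (SW M MS); rewrite col_weightsP => /forallP /(_ j).
have D1' : forall X Y, X \in S1 -> Y \in S1 -> X != Y -> 2 * d <= bdist X Y.
  move=> _ _ /imsetP[p pin ->] /imsetP[q qin ->] ne; apply: D1 => //.
  by apply: contraNneq ne => ->.
split.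
  by rewrite -cardS1; apply: code_le; [exact: W1 | exact: D1'].
move=> aw ad.
set t := w %/ a.
have Hw : a * t = w by rewrite /t mulnC divnK.
have [R [HR EA2]] : exists R : {set 'M[bool]_(m, a * n)},
   ([forall M in R, col_weights t M] &&
    [forall M in R, forall N in R, (M != N) ==> (2 * d <= bdist M N)])
   /\ A m (a * n) t d = #|R|.
  apply: max_att => //; apply/andP; split; [apply/forall_inP => M | apply/pairP => M N];
  by rewrite inE.
rewrite EA2.
case/andP: HR => /forall_inP RW /pairP RD.
have RW' : forall P, P \in R -> forall c, \sum_i (P i c : nat) = t.
  move=> P PR c; move: (RW P PR); rewrite col_weightsP => /forallP /(_ c) /eqP //.
set S2 := [set Psi P | P in R].
have cardS2 : #|S2| = #|R|.
  rewrite card_in_imset // => P P' PR PR' E; apply/eqP; apply: contraT => ne.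
  by have := RD P P' PR PR' ne; rewrite -dist_psi E bdist0; lia.
have key : d <= n * t * (a - 1).
  rewrite -(leq_pmul2l a0); apply: leq_trans ad _.
  by rewrite -Hw; apply: eq_leq; lia.
have key2 : n * (2 * w) = 2 * (n * t * (a - 1)) + n * (2 * t).
  rewrite -Hw; have e : a = (a - 1) + 1 by lia.
  rewrite {1}e mulnDl mul1n; nia.
have cross : forall X Y, X \in S1 -> Y \in S2 -> 2 * d <= bdist X Y.
  move=> _ _ /imsetP[[x M] /setXP[xQ MS] ->] /imsetP[P PR ->] /=.
  have := dist_cross x (SW M MS) (RW' P PR) Hw.
  rewrite key2; lia.
have disj : S1 :&: S2 = set0.
  apply/setP => X; rewrite !inE; apply/negbTE/andP => -[X1 X2].
  by have := cross X X X1 X2; rewrite bdist0; lia.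
have -> : #|Q| * #|S| + #|R| = #|S1 :|: S2| by rewrite cardsU disj cards0 subn0 cardS1 cardS2.
apply: code_le.
  move=> X; rewrite inE => /orP[/W1 // | /imsetP[P PR ->]].
  rewrite col_weightsP; apply/forallP => j; by rewrite (colPsi _ (RW' P PR)) Hw.
move=> X Y; rewrite !inE => /orP[X1|X2] /orP[Y1|Y2] ne.
- exact: D1'.
- exact: cross.
- rewrite bdistC; exact: cross.
move: X2 Y2 ne => /imsetP[P PR ->] /imsetP[P' PR' ->] ne.
rewrite dist_psi; apply: RD => //; by apply: contraNneq ne => ->.
Qed.
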